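(* Let $n\ge3$ and let $f$ be a $\gamma_{tr3}(P_3\square P_n)$-function such that the number of vertices $v$ with $f(v)=\emptyset$ is minimum among all $\gamma_{tr3}(P_3\square P_n)$-functions. Then $|f((i,0))|=1$ for every $i\in\{0,1,2\}$ and $|f((0,j))|=1$ for every $j\in\{1,2,\dots,n-1\}$.
   Context: $P_m$ denotes the directed path with vertex set $\{0,1,\dots,m-1\}$ and arcs $(i,i+1)$ for $0\le i\le m-2$. The Cartesian product $D_1\square D_2$ has vertex set $V(D_1)\times V(D_2)$, with an arc from $(x_1,y_1)$ to $(x_2,y_2)$ iff either $(x_1,x_2)$ is an arc of $D_1$ and $y_1=y_2$, or $x_1=x_2$ and $(y_1,y_2)$ is an arc of $D_2$. For a digraph $D$ and positive integer $k$, a $k$-rainbow dominating function on $D$ is $f:V(D)\to\mathcal P(\{1,\dots,k\})$ such that every $v$ with $f(v)=\emptyset$ satisfies $\bigcup_{u\in N^-(v)}f(u)=\{1,\dots,k\}$, where $N^-(v)$ is the set of in-neighbors of $v$; its weight is $\sum_v|f(v)|$. It is total if additionally the subdigraph induced by $\{v:f(v)\ne\emptyset\}$ has no isolated vertex (a vertex with neither in- nor out-neighbors in it). $\gamma_{trk}(D)$ is the minimum weight of a total $k$-rainbow dominating function, and a $\gamma_{trk}(D)$-function is one attaining it. *)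

(* Defs.v *)
From mathcomp Require Import all_boot.
Set Implicit Arguments. Unset Strict Implicit. Unset Printing Implicit Defensive.

Definition dpath (m : nat) : rel 'I_m := fun i j => val j == (val i).+1.

Definition cartprod (T1 T2 : finType) (e1 : rel T1) (e2 : rel T2) : rel (T1 * T2) :=
  fun x y => (e1 x.1 y.1 && (x.2 == y.2)) || ((x.1 == y.1) && e2 x.2 y.2).

Definition P3xPn (n : nat) : rel ('I_3 * 'I_n) := cartprod (@dpath 3) (@dpath n).

(* k-rainbow dominating function; colours {1..k} represented by 'I_k.
   (u, v) is an arc iff e u v. *)
Definition is_kRDF (T : finType) (e : rel T) (k : nat) (f : T -> {set 'I_k}) : Prop :=
  forall v : T, f v = set0 -> \bigcup_(u | e u v) f u = [set: 'I_k].

(* total: no vertex with nonempty label is isolated in the induced subdigraph *)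
Definition is_total (T : finType) (e : rel T) (k : nat) (f : T -> {set 'I_k}) : Prop :=
  forall v : T, f v != set0 ->
    exists u : T, u != v /\ f u != set0 /\ (e u v || e v u).

Definition is_TkRDF (T : finType) (e : rel T) (k : nat) (f : T -> {set 'I_k}) : Prop :=
  is_kRDF e f /\ is_total e f.

Definition rweight (T : finType) (k : nat) (f : T -> {set 'I_k}) : nat :=
  \sum_(v : T) #|f v|.

Definition is_gamma_trk_fun (T : finType) (e : rel T) (k : nat) (f : T -> {set 'I_k}) : Prop :=
  is_TkRDF e f /\ forall g : T -> {set 'I_k}, is_TkRDF e g -> rweight f <= rweight g.

Definition n_empty (T : finType) (k : nat) (f : T -> {set 'I_k}) : nat :=
  #|[set v : T | f v == set0]|.

(* Main.v *)
Require Import Defs.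
From mathcomp Require Import all_boot zify.
Set Implicit Arguments. Unset Strict Implicit. Unset Printing Implicit Defensive.

Definition upd (T : finType) k (f : T -> {set 'I_k}) (a : T) (A : {set 'I_k}) :=
  fun v => if v == a then A else f v.

Lemma rweight_upd (T : finType) k (f : T -> {set 'I_k}) a A :
  rweight (upd f a A) + #|f a| = rweight f + #|A|.
Proof.
rewrite /rweight (bigD1 a) //= [in RHS](bigD1 a) //= /upd eqxx.
rewrite (eq_bigr (fun v => #|f v|)); last by move=> v /negbTE ->.
move: (\sum_(i | i != a) #|f i|) => s; lia.
Qed.

Lemma core (T : finType) (e : rel T) k (f g : T -> {set 'I_k}) (u : T) :
  is_TkRDF e f -> f u != set0 -> g u != set0 ->
  (forall v, v != u -> f v \subset g v) ->
  (forall v, e u v -> g v != set0) ->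
  (forall v, g v != set0 -> f v = set0 -> e u v) ->
  is_TkRDF e g.
Proof.
move=> [HfD HfT] fu gu fsub gout Hnew; split.
- move=> v gv0.
  have vu : v != u by apply/eqP => Hvu; move: gu; rewrite -Hvu gv0 eqxx.
  have fv0 : f v = set0 by apply/eqP; rewrite -subset0 -gv0; exact: fsub.
  have nuv : ~~ e u v by apply/negP => euv; move: (gout v euv); rewrite gv0 eqxx.
  apply/eqP; rewrite eqEsubset subsetT /= -(HfD v fv0).
  apply/subsetP => c /bigcupP [x exv cx]; apply/bigcupP; exists x => //.
  have xu : x != u by apply/eqP => Hx; move: nuv; rewrite -Hx exv.
  exact: (subsetP (fsub x xu)).
- move=> v gv; case: (eqVneq (f v) set0) => fv.
  + exists u; split; last by split => //; rewrite (Hnew v gv fv).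
    by apply/eqP => Huv; move: fu; rewrite Huv fv eqxx.
  + have [x [xv [fx exv]]] := HfT v fv; exists x; split => //; split => //.
    case: (eqVneq x u) => [->|xu] //.
    apply/negP => /eqP gx0; move: fx; by rewrite -subset0 -gx0 fsub.
Qed.

Lemma fewer_empty (T : finType) k (f g : T -> {set 'I_k}) w :
  (forall v, g v = set0 -> f v = set0) -> f w = set0 -> g w != set0 ->
  n_empty g < n_empty f.
Proof.
move=> H fw gw; rewrite /n_empty; apply: proper_card; apply/properP; split.
  by apply/subsetP => v; rewrite !inE => /eqP /H ->.
by exists w; rewrite !inE ?fw // (negbTE gw).
Qed.

Lemma no_better (T : finType) (e : rel T) k (f g : T -> {set 'I_k}) :
  is_gamma_trk_fun e f ->
  (forall h : T -> {set 'I_k}, is_gamma_trk_fun e h -> n_empty f <= n_empty h) ->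
  is_TkRDF e g -> rweight g <= rweight f -> n_empty g < n_empty f -> False.
Proof.
move=> [Tf minf] mine Tg wg ng.
have : is_gamma_trk_fun e g by split => // h Th; exact: leq_trans wg (minf h Th).
by move/mine; rewrite leqNgt ng.
Qed.

Lemma no_lighter (T : finType) (e : rel T) k (f g : T -> {set 'I_k}) :
  is_gamma_trk_fun e f -> is_TkRDF e g -> rweight g < rweight f -> False.
Proof. by move=> [Tf minf] Tg; rewrite ltnNge minf. Qed.

Lemma moveA (T : finType) (e : rel T) k (f : T -> {set 'I_k}) (u : T) :
  is_gamma_trk_fun e f ->
  (forall h : T -> {set 'I_k}, is_gamma_trk_fun e h -> n_empty f <= n_empty h) ->
  1 < #|f u| -> 1 < #|[set v | e u v && (f v == set0)]|.
Proof.
move=> Gf Mf H2; have Tf := Gf.1.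
have [y fy] : exists y, y \in f u by apply/card_gt0P; lia.
have fu : f u != set0 by apply/set0Pn; exists y.
have cD := cardsD1 y (f u); rewrite fy in cD.
have guy : f u :\ y != set0 by rewrite -card_gt0; lia.
rewrite ltnNge; apply/negP; rewrite leq_eqVlt ltnS leqn0.
case/orP => [/cards1P [w Ew] | /eqP /cards0_eq E0].
- have : w \in [set v | e u v && (f v == set0)] by rewrite Ew set11.
  rewrite inE => /andP [euw /eqP fw].
  have wu : w != u by apply/eqP => Hw; move: fu; rewrite -Hw fw eqxx.
  set g := upd (upd f w [set y]) u (f u :\ y).
  have gE : forall v, g v = if v == u then f u :\ y else if v == w then [set y] else f v by [].
  have Tg : is_TkRDF e g.
  {    apply: (core (u := u) Tf) => //.
    + by rewrite gE eqxx.
    + by move=> v vu; rewrite gE (negbTE vu); case: ifP => [/eqP -> |_ //]; rewrite fw sub0set.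
    + move=> v euv; rewrite gE; case: ifP => // _; case: ifP => [_|vw].
        by apply/set0Pn; exists y; rewrite set11.
      apply/negP => /eqP fv0.
      have : v \in [set v | e u v && (f v == set0)] by rewrite inE euv fv0 eqxx.
      by rewrite Ew inE vw.
    + move=> v; rewrite gE; case: ifP => [/eqP -> _ fu0|_]; first by move: fu; rewrite fu0 eqxx.
      case: ifP => [/eqP -> _ _ //|_ fv fv0]; by move: fv; rewrite fv0 eqxx.
  }
  apply: (no_better Gf Mf Tg).
  - have h1 := rweight_upd (upd f w [set y]) u (f u :\ y).
    have h2 := rweight_upd f w [set y].
    have fwu : (upd f w [set y]) u = f u by rewrite /upd eq_sym (negbTE wu).
    rewrite fwu in h1; rewrite fw cards0 cards1 in h2.
    rewrite -/g in h1. lia.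
  - apply: (fewer_empty (w := w)) => //.
      move=> v; rewrite gE; case: ifP => [_ H|_]; first by move: guy; rewrite H eqxx.
      case: ifP => [/eqP -> //|_ //].
    by rewrite gE (negbTE wu) eqxx; apply/set0Pn; exists y; rewrite set11.
- set g := upd f u (f u :\ y).
  have gE : forall v, g v = if v == u then f u :\ y else f v by [].
  have Tg : is_TkRDF e g.
  {    apply: (core (u := u) Tf) => //.
    + by rewrite gE eqxx.
    + by move=> v vu; rewrite gE (negbTE vu).
    + move=> v euv; rewrite gE; case: ifP => // _.
      apply/negP => /eqP fv0.
      have : v \in [set v | e u v && (f v == set0)] by rewrite inE euv fv0 eqxx.
      by rewrite E0 inE.
    + move=> v; rewrite gE; case: ifP => [/eqP -> _ fu0|_ fv fv0].
      by move: fu; rewrite fu0 eqxx.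
      by move: fv; rewrite fv0 eqxx.
  }
  apply: (no_lighter Gf Tg).
  have h1 := rweight_upd f u (f u :\ y).
  rewrite -/g in h1. lia.
Qed.

Lemma moveB (T : finType) (e : rel T) k (f : T -> {set 'I_k}) (u w1 w2 : T) :
  is_gamma_trk_fun e f ->
  (forall h : T -> {set 'I_k}, is_gamma_trk_fun e h -> n_empty f <= n_empty h) ->
  e u w1 -> e u w2 -> w1 != w2 -> f w1 = set0 -> f w2 = set0 ->
  (forall v, e u v -> v = w1 \/ v = w2) -> 2 < #|f u| -> False.
Proof.
move=> Gf Mf e1 e2 w12 f1 f2 outu H3; have Tf := Gf.1.
have [y fy] : exists y, y \in f u by apply/card_gt0P; lia.
have fu : f u != set0 by apply/set0Pn; exists y.
have ny : [set y] != set0 by apply/set0Pn; exists y; rewrite set11.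
have w1u : w1 != u by apply/eqP => Hw; move: fu; rewrite -Hw f1 eqxx.
have w2u : w2 != u by apply/eqP => Hw; move: fu; rewrite -Hw f2 eqxx.
set g := upd (upd (upd f w2 [set y]) w1 [set y]) u [set y].
have gE : forall v, g v = if v == u then [set y] else if v == w1 then [set y]
   else if v == w2 then [set y] else f v by [].
have Tg : is_TkRDF e g.
{ apply: (core (u := u) Tf) => //.
  + by rewrite gE eqxx.
  + move=> v vu; rewrite gE (negbTE vu).
    case: ifP => [/eqP ->|_]; first by rewrite f1 sub0set.
    case: ifP => [/eqP ->|_ //]; by rewrite f2 sub0set.
  + have w21 : (w2 == w1) = false by rewrite eq_sym (negbTE w12).
    move=> v /outu [->|->]; rewrite gE ?(negbTE w1u) ?(negbTE w2u) ?w21 eqxx //.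
  + move=> v; rewrite gE; case: ifP => [/eqP -> _ fu0|_]; first by move: fu; rewrite fu0 eqxx.
    case: ifP => [/eqP -> _ _ //|_].
    case: ifP => [/eqP -> _ _ //|_ fv fv0]; by move: fv; rewrite fv0 eqxx. }
apply: (no_better Gf Mf Tg).
- have h1 := rweight_upd (upd (upd f w2 [set y]) w1 [set y]) u [set y].
  have h2 := rweight_upd (upd f w2 [set y]) w1 [set y].
  have h3 := rweight_upd f w2 [set y].
  have a1 : (upd (upd f w2 [set y]) w1 [set y]) u = f u.
    by rewrite /upd eq_sym (negbTE w1u) eq_sym (negbTE w2u).
  have a2 : (upd f w2 [set y]) w1 = f w1 by rewrite /upd (negbTE w12).
  rewrite a1 -/g in h1; rewrite a2 f1 in h2; rewrite f2 in h3.
  rewrite !cards1 cards0 in h1 h2 h3. lia.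
- apply: (fewer_empty (w := w1)) => //.
    move=> v; rewrite gE; case: ifP => [_ H|_]; first by move: ny; rewrite H eqxx.
    case: ifP => [_ H|_]; first by move: ny; rewrite H eqxx.
    case: ifP => [_ H|_ //]; by move: ny; rewrite H eqxx.
  by rewrite gE (negbTE w1u) eqxx.
Qed.

Lemma edgeP n (x y : 'I_3 * 'I_n) : P3xPn x y ->
  (val y.1 = (val x.1).+1 /\ val y.2 = val x.2) \/
  (val y.1 = val x.1 /\ val y.2 = (val x.2).+1).
Proof.
rewrite /P3xPn /cartprod /dpath => /orP [/andP [/eqP h1 /eqP h2]|/andP [/eqP h1 /eqP h2]].
  by left; rewrite h2.
by right; rewrite h1.
Qed.

Lemma pairE n (x y : 'I_3 * 'I_n) : val x.1 = val y.1 -> val x.2 = val y.2 -> x = y.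
Proof. by move: x y => [a b] [c d] /= h1 h2; rewrite (val_inj h1) (val_inj h2). Qed.

Lemma same_out n (u v v' : 'I_3 * 'I_n) : P3xPn u v -> P3xPn u v' ->
  (val v.2 == val u.2) = (val v'.2 == val u.2) -> v = v'.
Proof.
move=> /edgeP h1 /edgeP h2 H; apply: pairE.
  move: H; case: h1 => [[a b]|[a b]]; case: h2 => [[c d]|[c d]]; rewrite ?b ?d; lia.
move: H; case: h1 => [[a b]|[a b]]; case: h2 => [[c d]|[c d]]; rewrite ?b ?d; lia.
Qed.

Lemma forms_differ n (u v1 v2 : 'I_3 * 'I_n) : P3xPn u v1 -> P3xPn u v2 -> v1 != v2 ->
  (val v1.2 == val u.2) != (val v2.2 == val u.2).
Proof.
move=> h1 h2 hne; apply/negP => /eqP H; move: hne; by rewrite (same_out h1 h2 H) eqxx.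
Qed.

Lemma out_two n (u v1 v2 v : 'I_3 * 'I_n) : P3xPn u v1 -> P3xPn u v2 -> v1 != v2 ->
  P3xPn u v -> v = v1 \/ v = v2.
Proof.
move=> h1 h2 hne h; have H12 := forms_differ h1 h2 hne.
case: (boolP ((val v.2 == val u.2) == (val v1.2 == val u.2))) => [/eqP H|H].
  by left; exact: same_out h h1 H.
right; apply: same_out h h2 _; move: H H12.
by case: (val v.2 == _); case: (val v1.2 == _); case: (val v2.2 == _).
Qed.

Definition bnd n (x : 'I_3 * 'I_n) := (val x.1 == 0) || (val x.2 == 0).

Lemma in_unique n (w x y : 'I_3 * 'I_n) : bnd w -> P3xPn x w -> P3xPn y w -> x = y.
Proof.
move=> /orP hb /edgeP hx /edgeP hy; apply: pairE.
  case: hb => /eqP hb; case: hx => [[a b]|[a b]]; case: hy => [[c d]|[c d]]; lia.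
case: hb => /eqP hb; case: hx => [[a b]|[a b]]; case: hy => [[c d]|[c d]]; lia.
Qed.

Lemma in_bnd n (w x : 'I_3 * 'I_n) : bnd w -> P3xPn x w -> bnd x.
Proof.
rewrite /bnd => /orP hb /edgeP hx; apply/orP.
case: hb => /eqP hb; case: hx => [[a b]|[a b]].
- lia.
- by left; apply/eqP; lia.
- by right; apply/eqP; lia.
- lia.
Qed.

Lemma bool1 (a b : bool) : a != b -> ~~ a -> b. Proof. by case: a; case: b. Qed.
Lemma bool2 (a b : bool) : a != b -> a -> ~~ b. Proof. by case: a; case: b. Qed.

Lemma pick_w n (u v1 v2 : 'I_3 * 'I_n) : bnd u -> P3xPn u v1 -> P3xPn u v2 -> v1 != v2 ->
  exists2 w, (w = v1 \/ w = v2) & bnd w.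
Proof.
move=> hb h1 h2 hne; have H12 := forms_differ h1 h2 hne.
have bd : forall v, P3xPn u v -> val u.2 == 0 -> (val v.2 == val u.2) -> bnd v.
  by move=> v _ /eqP a /eqP b; rewrite /bnd; apply/orP; right; apply/eqP; lia.
have br : forall v, P3xPn u v -> val u.1 == 0 -> ~~ (val v.2 == val u.2) -> bnd v.
  move=> v /edgeP hv /eqP a /eqP b; rewrite /bnd; apply/orP; left; apply/eqP.
  case: hv => [[c d]|[c d]]; lia.
case: (boolP (val u.2 == 0)) => h0.
  case: (boolP (val v1.2 == val u.2)) => f1.
    by exists v1; [left | exact: bd h1 h0 f1].
  exists v2; first by right.
  exact: bd h2 h0 (bool1 H12 f1).
have h0' : val u.1 == 0 by move: hb; rewrite /bnd (negbTE h0) orbF.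
case: (boolP (val v1.2 == val u.2)) => f1.
  exists v2; first by right.
  exact: br h2 h0' (bool2 H12 f1).
by exists v1; [left | exact: br h1 h0' f1].
Qed.

Lemma bnd_le1 n (f : 'I_3 * 'I_n -> {set 'I_3}) (u : 'I_3 * 'I_n) :
  is_gamma_trk_fun (@P3xPn n) f ->
  (forall g : 'I_3 * 'I_n -> {set 'I_3},
      is_gamma_trk_fun (@P3xPn n) g -> n_empty f <= n_empty g) ->
  bnd u -> #|f u| <= 1.
Proof.
move=> Gf Mf bu; rewrite leqNgt; apply/negP => H2.
have := moveA Gf Mf H2 => /card_gt1P [v1 [v2 [Hv1 Hv2 Hne]]].
rewrite !inE in Hv1 Hv2; case/andP: Hv1 => e1 /eqP f1; case/andP: Hv2 => e2 /eqP f2.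
have [w Hw bw] := pick_w bu e1 e2 Hne.
have ew : P3xPn u w by case: Hw => ->.
have fw : f w = set0 by case: Hw => ->.
have Hd := Gf.1.1 w fw.
have sub : [set: 'I_3] \subset f u.
  by rewrite -Hd; apply/bigcupsP => x exw; rewrite (in_unique bw exw ew).
have := subset_leq_card sub; rewrite cardsT card_ord => H3.
apply: (moveB Gf Mf e1 e2 Hne f1 f2 _ H3) => v.
exact: out_two e1 e2 Hne.
Qed.

Theorem lemma4p10 (n : nat) (f : 'I_3 * 'I_n -> {set 'I_3}) :
  3 <= n ->
  is_gamma_trk_fun (@P3xPn n) f ->
  (forall g : 'I_3 * 'I_n -> {set 'I_3},
      is_gamma_trk_fun (@P3xPn n) g -> n_empty f <= n_empty g) ->
  (forall (i : 'I_3) (j : 'I_n), val j = 0 -> #|f (i, j)| = 1) /\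
  (forall (j : 'I_n), 1 <= val j -> #|f (ord0, j)| = 1).
Proof.
move=> _ Gf Mf.
have key : forall v, bnd v -> #|f v| = 1.
  move=> v bv; apply/eqP; rewrite eqn_leq (bnd_le1 Gf Mf bv) card_gt0.
  apply/negP => /eqP fv0.
  have Hd := Gf.1.1 v fv0.
  have : (ord0 : 'I_3) \in \bigcup_(x | P3xPn x v) f x by rewrite Hd inE.
  case/bigcupP => x exv _.
  have bx := in_bnd bv exv.
  have sub : [set: 'I_3] \subset f x.
    by rewrite -Hd; apply/bigcupsP => y eyv; rewrite (in_unique bv eyv exv).
  have := subset_leq_card sub; rewrite cardsT card_ord.
  have := bnd_le1 Gf Mf bx; lia.
split.
  by move=> i j hj; apply: key; rewrite /bnd /= hj eqxx orbT.
by move=> j _; apply: key; rewrite /bnd /=.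
Qed.
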